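(* Let $V$ be a finite set of nodes with $|V|\ge2$ and $L\ge1$; each $v\in V$ has coordinates $x_1^v,\dots,x_L^v\in[0,1)$, pairwise distinct within each space. Suppose the network on $V$ is a correct FedLay overlay with neighbor sets $N_v$. A node $u\in V$ fails: it is removed, and every remaining node $v$ keeps neighbor set $N_v\setminus\{u\}$. Fix a space $i$ and let $p\ne u$ be a node adjacent to $u$ in space $i$ (before the failure), and let $q$ denote the other adjacent node of $u$ in space $i$ before the failure (so $q$ is the predecessor of $u$ if $p$ is its successor, and vice versa; possibly $q=p$). Suppose $u$ is the successor of $p$ (the case where $u$ is the predecessor is symmetric, with the roles of $\ell^-$ and $\ell^+$ below exchanged). Starting at $p$, a Neighbor_repair message with destination $x_i^u$ is routed in the decreasing direction as follows: a node $v$ holding it considers $S_v=\{w\in N_v\setminus\{u\}:\ \ell^-(x_i^w,x_i^u)<\ell^-(x_i^v,x_i^u)\}$; if $S_v\neq\emptyset$, $v$ forwards the message to a $w'\in S_v$ minimizing $\ell^-(x_i^{w},x_i^u)$ over $S_v$; otherwise the message stops at $v$. Then the message stops, and the node at which it stops is $q$. Symmetrically, if $u$ is the predecessor of $p$ and routing uses $\ell^+$ in place of $\ell^-$, the message stops at $q$.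
   Context: Coordinates lie on a circle of perimeter $1$ (modulo $1$). In space $i$, the successor of $v$ is the node reached first from $x_i^v$ moving in the direction of increasing coordinate (mod 1), and the predecessor is the node reached first moving in the decreasing direction; these are the two adjacent nodes of $v$ in space $i$. For $y,z\in[0,1)$ define the arc lengths $\ell^-(y,z)=(y-z)\bmod 1$ (length travelled from $y$ to $z$ in the decreasing direction) and $\ell^+(y,z)=(z-y)\bmod 1$. A FedLay network is correct if every node $v$ has neighbor set $N_v$ equal to the set of nodes adjacent to $v$ in at least one of the $L$ spaces (and no others), and each node knows its neighbors' coordinates. *)

(* Defs.v *)
From HB Require Import structures.
From mathcomp Require Import all_boot all_order all_algebra.
From mathcomp Require Import reals.
Set Implicit Arguments. Unset Strict Implicit. Unset Printing Implicit Defensive.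
Import Order.TTheory GRing.Theory Num.Theory.
Local Open Scope ring_scope.

Definition mod1 {R : realType} (a : R) : R := a - (Num.floor a)%:~R.

Definition ellm {R : realType} (y z : R) : R := mod1 (y - z).
Definition ellp {R : realType} (y z : R) : R := mod1 (z - y).

Section FedLay.
Context {R : realType} {V : finType} {L : nat}.
Variable x : 'I_L -> V -> R.

Definition is_succ (i : 'I_L) (v w : V) : Prop :=
  w != v /\ forall w', w' != v -> ellp (x i v) (x i w) <= ellp (x i v) (x i w').
Definition is_pred (i : 'I_L) (v w : V) : Prop :=
  w != v /\ forall w', w' != v -> ellm (x i v) (x i w) <= ellm (x i v) (x i w').

Definition adjacent (i : 'I_L) (v w : V) : Prop := is_succ i v w \/ is_pred i v w.

Definition fedlay_correct (N : V -> {set V}) : Prop :=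
  forall v w, w \in N v <-> exists i, adjacent i v w.

(* Neighbor_repair routing after failure of u, towards x_i^u, w.r.t. the
   arc-length d (ellm for decreasing direction, ellp for increasing). *)
Definition repair_cand (N : V -> {set V}) (u : V) (i : 'I_L)
    (d : R -> R -> R) (v : V) : {set V} :=
  [set w in N v :\ u | d (x i w) (x i u) < d (x i v) (x i u)].

Definition repair_step (N : V -> {set V}) (u : V) (i : 'I_L)
    (d : R -> R -> R) (v w : V) : bool :=
  (w \in repair_cand N u i d v) &&
  [forall w', (w' \in repair_cand N u i d v) ==>
                (d (x i w) (x i u) <= d (x i w') (x i u))].

Definition repair_stops (N : V -> {set V}) (u : V) (i : 'I_L)
    (d : R -> R -> R) (v : V) : Prop := repair_cand N u i d v = set0.

(* The message started at p stops, and it stops at q: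
   no infinite run exists, and every run that reaches a stopping node ends at q. *)
Definition repair_ends_at (N : V -> {set V}) (u : V) (i : 'I_L)
    (d : R -> R -> R) (p q : V) : Prop :=
  (~ exists f : nat -> V, f 0%N = p /\
       forall k, repair_step N u i d (f k) (f k.+1)) /\
  (forall s : seq V, path (repair_step N u i d) p s ->
       repair_stops N u i d (last p s) -> last p s = q).
End FedLay.

(* Main.v *)
Require Import Defs.
From HB Require Import structures.
From mathcomp Require Import all_boot all_order all_algebra.
From mathcomp Require Import reals.
From mathcomp Require Import zify ring lra.
Import Order.TTheory GRing.Theory Num.Theory.
Local Open Scope ring_scope.

Section Aux.
Context {R : realType}.

Lemma mod1_ge0 (a : R) : 0 <= mod1 a.
Proof. rewrite /mod1 subr_ge0; exact: floor_le. Qed.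

Lemma mod1_lt1 (a : R) : mod1 a < 1.
Proof.
have h : a < (Num.floor a + 1)%:~R by rewrite -floor_lt_int ltzD1.
rewrite /mod1 rmorphD /= in h *. lra.
Qed.

Lemma int_01 (z : int) : -1 < (z%:~R : R) -> (z%:~R : R) < 2 -> z = 0 \/ z = 1.
Proof.
move=> h1 h2.
have : (-1 : int)%:~R < (z%:~R : R) by rewrite rmorphN /=.
have : (z%:~R : R) < (2 : int)%:~R by [].
rewrite !ltr_int => a b. lia.
Qed.

Lemma mod1_tri (s t : R) :
  mod1 (s + t) = mod1 s + mod1 t \/ mod1 (s + t) = mod1 s + mod1 t - 1.
Proof.
set z := (Num.floor s + Num.floor t - Num.floor (s + t)).
have ez : (z%:~R : R) = mod1 (s + t) - mod1 s - mod1 t + 0 + (s + t - s - t).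
  rewrite /z /mod1 !rmorphD !rmorphN /=. ring.
have e0 : s + t - s - t = 0 by ring.
rewrite e0 addr0 addr0 in ez.
have := mod1_ge0 s; have := mod1_ge0 t; have := mod1_ge0 (s+t).
have := mod1_lt1 s; have := mod1_lt1 t; have := mod1_lt1 (s+t).
move=> *.
have [h|h] : z = 0 \/ z = -1.
  have : (-z) = 0 \/ (-z) = 1.
    apply: int_01; rewrite rmorphN /= ez; lra.
  lia.
- left. move: ez; rewrite h /=. lra.
- right. move: ez; rewrite h /=. lra.
Qed.

Lemma mod1_pos (a b : R) : 0 <= a < 1 -> 0 <= b < 1 -> a != b -> 0 < mod1 (a - b).
Proof.
move=> /andP[a0 a1] /andP[b0 b1] nab.
rewrite lt_neqAle mod1_ge0 andbT eq_sym; apply/negP => /eqP h.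
move: h; rewrite /mod1 => /eqP; rewrite subr_eq0 => /eqP h.
have : -1 < (Num.floor (a - b))%:~R :> R by rewrite -h; lra.
have : (Num.floor (a - b))%:~R < 1 :> R by rewrite -h; lra.
have ->: (-1 : R) = (-1 : int)%:~R by rewrite rmorphN.
have ->: (1 : R) = (1 : int)%:~R by [].
rewrite !ltr_int => c d.
have hz : Num.floor (a - b) = 0 by lia.
move: h; rewrite hz /= => /eqP; rewrite subr_eq0 => /eqP e.
by rewrite e eqxx in nab.
Qed.

End Aux.

Section Main.
Context {R : realType} {V : finType} {L : nat}.
Variables (x : 'I_L -> V -> R) (N : V -> {set V}) (u p q : V) (i : 'I_L)
  (D : R -> R -> R).
Hypothesis D1 : forall a b, D a b < 1.
Hypothesis Dpos : forall v w, v != w -> 0 < D (x i v) (x i w).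
Hypothesis Dtri : forall a b c, D a b = D a c + D c b \/ D a b = D a c + D c b - 1.
Hypothesis HN : forall v w, w != v ->
  (forall w', w' != v -> D (x i v) (x i w) <= D (x i v) (x i w')) -> w \in N v.
Hypothesis qu : q != u.
Hypothesis qmin : forall w, w != u -> D (x i q) (x i u) <= D (x i w) (x i u).
Hypothesis pu : p != u.

Lemma main_ends : repair_ends_at x N u i D p q.
Proof.
split.
- case=> f [f0 hf].
  set g := fun k => D (x i (f k)) (x i u).
  have gdec : forall k, g k.+1 < g k.
    move=> k; have := hf k; rewrite /repair_step /repair_cand => /andP[].
    by rewrite inE => /andP[].
  have gmono : forall m n, (m < n)%N -> g n < g m.
    move=> m n /subnKC <-; elim: (n - m.+1)%N => [|k ih].
      by rewrite addn0; apply: gdec.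
    rewrite addnS; exact: lt_trans (gdec _) ih.
  have finj : injective (fun k : 'I_(#|V|.+1) => f k).
    move=> a b /= e; apply/val_inj => /=.
    case: (ltngtP a b) => // h.
    + by have := gmono _ _ h; rewrite /g e ltxx.
    + by have := gmono _ _ h; rewrite /g e ltxx.
  by have := leq_card _ finj; rewrite card_ord ltnn.
- move=> s hp.
  have lu : last p s != u.
    move: hp; case/lastP: s => [|s' y] //=.
    rewrite last_rcons rcons_path => /andP[_].
    by rewrite /repair_step /repair_cand => /andP[]; rewrite !inE => /andP[] /andP[].
  set v := last p s in lu *.
  rewrite /repair_stops => hst.
  apply/eqP; apply: contraT => vq.
  have hA : D (x i q) (x i u) < D (x i v) (x i u).
    rewrite lt_neqAle qmin // andbT; apply/negP => /eqP e.
    have := Dpos _ _ vq; case: (Dtri (x i v) (x i u) (x i q)) => h; have := D1 (x i v) (x i q); lra.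
  have hC : D (x i v) (x i q) < D (x i v) (x i u).
    have := Dpos _ _ qu; have := D1 (x i v) (x i q).
    case: (Dtri (x i v) (x i u) (x i q)) => h; lra.
  have qv : q != v by rewrite eq_sym.
  have [w' wv wmin] : exists2 w', w' != v & forall j, j != v -> D (x i v) (x i w') <= D (x i v) (x i j).
    case: (@arg_minP _ _ V q (fun j => j != v) (fun j => D (x i v) (x i j)) qv).
    move=> j jv jm; exists j => // k kv; exact: jm.
  have wN := HN _ _ wv wmin.
  have hE : D (x i v) (x i w') < D (x i v) (x i u).
    exact: le_lt_trans (wmin q qv) hC.
  have wu : w' != u.
    by apply/eqP => e; move: hE; rewrite e ltxx.
  have hW : D (x i w') (x i u) < D (x i v) (x i u).
    have vw : v != w' by rewrite eq_sym.
    have := Dpos _ _ vw; have := D1 (x i w') (x i u).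
    case: (Dtri (x i v) (x i u) (x i w')) => h; lra.
  have : w' \in repair_cand x N u i D v by rewrite /repair_cand !inE wu wN hW.
  by rewrite hst inE.
Qed.
End Main.

Theorem theorem2 (R : realType) (V : finType) (L : nat)
    (x : 'I_L -> V -> R) (N : V -> {set V}) (u p q : V) (i : 'I_L) :
  (1 < #|V|)%N -> (0 < L)%N ->
  (forall j v, 0 <= x j v < 1) ->
  (forall j, injective (x j)) ->
  fedlay_correct x N ->
  p != u ->
  (is_succ x i p u -> is_succ x i u q -> repair_ends_at x N u i ellm p q) /\
  (is_pred x i p u -> is_pred x i u q -> repair_ends_at x N u i ellp p q).
Proof.
move=> _ _ hx hinj hN pu.
have xne : forall v w, v != w -> x i v != x i w.
  by move=> v w; rewrite (inj_eq (hinj i)).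
split.
- move=> _ [qu qmin]; apply: main_ends => //.
  + by move=> a b; rewrite /ellm /ellp; exact: mod1_lt1.
  + by move=> v w vw; apply: mod1_pos => //; apply: xne.
  + move=> a b c; rewrite /ellm.
    have -> : a - b = (a - c) + (c - b) by ring.
    exact: mod1_tri.
  + move=> v w wv wmin; apply/hN; exists i; right; split => //.
- move=> _ [qu qmin]; apply: main_ends => //.
  + by move=> a b; rewrite /ellm /ellp; exact: mod1_lt1.
  + by move=> v w vw; apply: mod1_pos => //; apply: xne; rewrite eq_sym.
  + move=> a b c; rewrite /ellp.
    have -> : b - a = (c - a) + (b - c) by ring.
    exact: mod1_tri.
  + move=> v w wv wmin; apply/hN; exists i; left; split => //.
Qed.
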